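(* Let $\mathsf G=(\mathsf V,\mathsf E)$ be a finite connected graph without loops or multiple edges, with discrete Laplacian $\mathcal L=\mathcal I\mathcal I^T$. Then the semigroup $(e^{-t\mathcal L^2})_{t\ge0}$ is eventually $\ell^\infty$-contractive, hence eventually sub-Markovian: there exists $t_0>0$ such that for all $t\ge t_0$ the matrix $e^{-t\mathcal L^2}$ is positive (maps vectors with nonnegative entries to vectors with nonnegative entries) and satisfies $\|e^{-t\mathcal L^2}f\|_\infty\le\|f\|_\infty$ for all $f$.
   Context: $V=|\mathsf V|$ and functions on vertices are vectors in $\mathbb C^V$. After fixing an arbitrary orientation of the edges, the incidence matrix $\mathcal I\in\mathbb R^{V\times E}$ has entries $\iota_{\mathsf v\mathsf e}=-1$ if $\mathsf v$ is the initial endpoint of $\mathsf e$, $+1$ if $\mathsf v$ is the terminal endpoint of $\mathsf e$, and $0$ otherwise; $\mathcal L=\mathcal I\mathcal I^T$. *)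

(* Defs.v *)
From HB Require Import structures.
From mathcomp Require Import all_boot all_order all_algebra.
From mathcomp Require Import all_classical all_reals all_analysis.
From mathcomp Require Import complex.
Set Implicit Arguments. Unset Strict Implicit. Unset Printing Implicit Defensive.
Import Order.TTheory GRing.Theory Num.Theory.
Local Open Scope ring_scope.

(* A finite graph on vertex set 'I_n with edge set 'I_m; each edge e carries a
   fixed (arbitrary) orientation: initial endpoint src e, terminal endpoint tgt e. *)

Definition no_loops n m (src tgt : 'I_m -> 'I_n) : Prop :=
  forall e, src e != tgt e.

Definition no_multi_edges n m (src tgt : 'I_m -> 'I_n) : Prop :=
  forall e e', e != e' -> [set src e; tgt e] != [set src e'; tgt e'].

Definition adj n m (src tgt : 'I_m -> 'I_n) : rel 'I_n :=
  fun u v => [exists e, ((src e == u) && (tgt e == v)) || ((src e == v) && (tgt e == u))].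

Definition connected_graph n m (src tgt : 'I_m -> 'I_n) : Prop :=
  forall u v, connect (adj src tgt) u v.

Definition incidence (R : pzRingType) n m (src tgt : 'I_m -> 'I_n) : 'M[R]_(n, m) :=
  \matrix_(v, e) (if v == src e then -1 else if v == tgt e then 1 else 0).

Definition laplacian (R : pzRingType) n m (src tgt : 'I_m -> 'I_n) : 'M[R]_n :=
  incidence R src tgt *m (incidence R src tgt)^T.

Definition expmx (R : realType) n (A : 'M[R]_n) : 'M[R]_n :=
  \matrix_(i, j) limn (fun N : nat => \sum_(0 <= k < N) ((A ^+ k) i j / (k`!)%:R)).

Definition norm_inf (R : rcfType) n (f : 'cV[R[i]]_n) : R[i] :=
  \big[Num.max/0]_(i < n) `|f i 0|.

Definition cplx_mx (R : rcfType) n m (A : 'M[R]_(n, m)) : 'M[R[i]]_(n, m) :=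
  map_mx (fun x => (x%:C)%C) A.

(* Main.v *)
Require Import Defs.
From HB Require Import structures.
From mathcomp Require Import all_boot all_order all_algebra.
From mathcomp Require Import all_classical all_reals all_analysis.
From mathcomp Require Import complex.
Import Order.TTheory GRing.Theory Num.Theory.
Local Open Scope ring_scope.
Set Implicit Arguments. Unset Strict Implicit. Unset Printing Implicit Defensive.
Local Open Scope sesquilinear_scope.

Lemma ReD (R : rcfType) (a b : R[i]) : complex.Re (a + b) = complex.Re a + complex.Re b.
Proof. by case: a => ? ?; case: b. Qed.

Lemma Re0 (R : rcfType) : complex.Re (0 : R[i]) = 0.
Proof. by []. Qed.

Lemma Re_sum (R : rcfType) (I : Type) (r : seq I) (P : pred I) (F : I -> R[i]) :
  complex.Re (\sum_(i <- r | P i) F i) = \sum_(i <- r | P i) complex.Re (F i).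
Proof. exact: (big_morph _ (@ReD R) (@Re0 R)). Qed.

Lemma ReMr (R : rcfType) (c : R[i]) (x : R) : complex.Re (c * (x%:C)%C) = complex.Re c * x.
Proof. by case: c => a b /=; rewrite mulr0 subr0. Qed.

Lemma ReC (R : rcfType) (x : R) : complex.Re ((x%:C)%C) = x.
Proof. by []. Qed.

Lemma conj_diag_entry (C: numClosedFieldType) n (U : 'M[C]_n) (d : 'rV[C]_n) i j :
 (U^t* *m diag_mx d *m U) i j = \sum_l (U l i)^* * d 0 l * U l j.
Proof. by rewrite mxE; apply: eq_bigr => l _; rewrite mul_mx_diag !mxE. Qed.

Lemma unitary_tC (C: numClosedFieldType) n (U : 'M[C]_n) :
  U \is unitarymx -> U^t* *m U = 1%:M.
Proof.
move=> HU; rewrite -invmx_unitary //; apply: mulVmx; exact: unitarymx_unit.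
Qed.

Lemma conj_diag_pow (C: numClosedFieldType) n (U : 'M[C]_n) (d : 'rV[C]_n) k :
  U \is unitarymx ->
  (U^t* *m diag_mx d *m U) ^+ k = U^t* *m diag_mx (\row_l (d 0 l ^+ k)) *m U.
Proof.
move=> HU; elim: k => [|k IH].
  rewrite expr0.
  have -> : (\row_l (d 0 l ^+ 0)) = const_mx 1 by apply/rowP => l; rewrite !mxE expr0.
  by rewrite diag_const_mx mulmx1 unitary_tC.
rewrite exprS IH -mulmxE.
rewrite -!mulmxA; congr (_ *m _).
rewrite !mulmxA (mulmxtVK _ HU) mulmx_diag; congr (_ *m _); congr diag_mx.
by apply/rowP => l; rewrite !mxE exprS.
Qed.

Lemma cplx_mxM (R : rcfType) n p q (A : 'M[R]_(n, p)) (B : 'M[R]_(p, q)) :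
  cplx_mx (A *m B) = cplx_mx A *m cplx_mx B.
Proof.
apply/matrixP => i j; rewrite !mxE rmorph_sum; apply: eq_bigr => l _.
by rewrite rmorphM !mxE.
Qed.

Lemma cplx_mxX (R : rcfType) n (A : 'M[R]_n) k :
  cplx_mx (A ^+ k) = (cplx_mx A) ^+ k.
Proof.
elim: k => [|k IH].
  rewrite !expr0; apply/matrixP => i j; rewrite !mxE.
  by case: (i == j).
by rewrite !exprS -!mulmxE cplx_mxM IH.
Qed.

Lemma cplx_mxT (R : rcfType) n p (A : 'M[R]_(n, p)) :
  cplx_mx A^T = (cplx_mx A)^T.
Proof. by apply/matrixP => i j; rewrite !mxE. Qed.
Local Open Scope classical_set_scope.
Lemma limn_sum_exp (R : realType) (I : finType) (w x : I -> R) :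
  limn (fun N => \sum_l w l * series (exp_coeff (x l)) N) = \sum_l w l * expR (x l).
Proof.
apply: cvg_lim => //.
suff H : forall r : seq I, (fun N => \sum_(l <- r) w l * series (exp_coeff (x l)) N) @ \oo
   --> \sum_(l <- r) w l * expR (x l) by exact: H.
elim => [|a r IH].
  under eq_cvg do rewrite big_nil.
  rewrite big_nil; exact: cvg_cst.
under eq_cvg do rewrite big_cons.
rewrite big_cons; apply: cvgD => //.
apply: cvgMl_tmp.
exact: (is_cvg_series_exp_coeff (x a)).
Qed.

Local Close Scope classical_set_scope.

Lemma expRN_le (R : realType) (y : R) : 0 < y -> expR (- y) <= y^-1.
Proof.
move=> y0; rewrite expRN lef_pV2 ?posrE ?expR_gt0 //.
by apply: le_trans (expR_ge1Dx y); rewrite lerDr.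
Qed.

Lemma max_ge0 (C : numDomainType) (x y : C) : 0 <= x -> 0 <= y -> 0 <= Num.max x y.
Proof. by move=> hx hy; rewrite /Order.max; case: ifP. Qed.

Lemma max_le (C : numDomainType) (x y c : C) : x <= c -> y <= c -> Num.max x y <= c.
Proof. by move=> hx hy; rewrite /Order.max; case: ifP. Qed.

Lemma le_maxl (C : numDomainType) (x y : C) : 0 <= x -> 0 <= y -> x <= Num.max x y.
Proof. by move=> hx hy; rewrite /Order.max; case: ifP => // /ltW. Qed.

Lemma le_maxr (C : numDomainType) (x y : C) : 0 <= x -> 0 <= y -> y <= Num.max x y.
Proof.
move=> hx hy; rewrite /Order.max; case: ifP => // /negbT.
by rewrite -real_leNgt ?ger0_real.
Qed.

Lemma bigmax_ge0 (C : numDomainType) (I : Type) (r : seq I) (F : I -> C) :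
  (forall j, 0 <= F j) -> 0 <= \big[Num.max/0]_(j <- r) F j.
Proof. by move=> hF; elim: r => [|a r IH]; rewrite ?big_nil ?big_cons ?max_ge0. Qed.

Lemma le_bigmax_c (C : numDomainType) (I : eqType) (r : seq I) (F : I -> C) i :
  (forall j, 0 <= F j) -> i \in r -> F i <= \big[Num.max/0]_(j <- r) F j.
Proof.
move=> hF; elim: r => [|a r IH] //; rewrite in_cons big_cons => /orP[/eqP->|H].
  by apply: le_maxl => //; exact: bigmax_ge0.
apply: le_trans (IH H) _; apply: le_maxr => //; exact: bigmax_ge0.
Qed.

Lemma bigmax_le_c (C : numDomainType) (I : Type) (r : seq I) (F : I -> C) c :
  0 <= c -> (forall j, F j <= c) -> \big[Num.max/0]_(j <- r) F j <= c.
Proof. by move=> c0 hF; elim: r => [|a r IH]; rewrite ?big_nil ?big_cons ?max_le. Qed.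

Lemma le_norm_inf (R : rcfType) n (f : 'cV[R[i]]_n) i : `|f i 0| <= norm_inf f.
Proof.
rewrite /norm_inf; apply: (@le_bigmax_c _ _ _ (fun i => `|f i 0|)) => //.
by rewrite mem_index_enum.
Qed.

Lemma norm_inf_le (R : rcfType) n (f : 'cV[R[i]]_n) c :
  0 <= c -> (forall i, `|f i 0| <= c) -> norm_inf f <= c.
Proof. by move=> c0 hf; rewrite /norm_inf; apply: (@bigmax_le_c _ _ _ (fun i => `|f i 0|)). Qed.

Lemma norm_inf_ge0 (R : rcfType) n (f : 'cV[R[i]]_n) : 0 <= norm_inf f.
Proof. by rewrite /norm_inf; apply: (@bigmax_ge0 _ _ _ (fun i => `|f i 0|)). Qed.

Lemma le_sum1 (R : numDomainType) (I : finType) (F : I -> R) i :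
  (forall k, 0 <= F k) -> F i <= \sum_k F k.
Proof. by move=> hF; rewrite (bigD1 i) //= lerDl sumr_ge0. Qed.
Local Open Scope sesquilinear_scope.

Lemma conjC_realC (R : rcfType) (r : R) : ((r%:C)%C)^* = (r%:C)%C :> R[i].
Proof. exact: conjc_real. Qed.

Lemma lap_ker (R : realType) n m (src tgt : 'I_m -> 'I_n)
  (Hloop : no_loops src tgt) (Hconn : connected_graph src tgt) (x : 'cV[R[i]]_n) :
  cplx_mx (laplacian R src tgt) *m x = 0 -> forall u v, x u 0 = x v 0.
Proof.
move=> Hx.
set Ic := cplx_mx (incidence R src tgt).
have HL : cplx_mx (laplacian R src tgt) = Ic *m Ic^T by rewrite /laplacian cplx_mxM cplx_mxT.
set y := Ic^T *m x.
have HIc : Ic ^ Num.conj = Ic by apply/matrixP => i j; rewrite !mxE conjC_realC.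
have Hyt : y^t* = x^t* *m Ic.
  by rewrite /y trmx_mul trmxK map_mxM HIc.
have Hs : \sum_e (y e 0)^* * y e 0 = 0.
  have -> : \sum_e (y e 0)^* * y e 0 = (y^t* *m y) 0 0.
    by rewrite mxE; apply: eq_bigr => e _; rewrite !mxE.
  rewrite Hyt -mulmxA /y.
  have -> : Ic *m (Ic^T *m x) = cplx_mx (laplacian R src tgt) *m x by rewrite HL mulmxA.
  by rewrite Hx mulmx0 mxE.
have Hy0 : forall e, y e 0 = 0.
  move=> e; move/psumr_eq0P: Hs => Hs.
  have H := Hs (fun e _ => ltac:(by rewrite mulrC mul_conjC_ge0)) e isT.
  have /eqP : y e 0 * (y e 0)^* = 0 by rewrite mulrC H.
  by rewrite mul_conjC_eq0 => /eqP.
have Hedge : forall e, x (src e) 0 = x (tgt e) 0.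
  move=> e; have := Hy0 e; rewrite /y mxE (bigD1 (src e)) //= (bigD1 (tgt e)) /=; last first.
    by rewrite eq_sym Hloop.
  rewrite big1 => [|v /andP[hv1 hv2]]; last first.
    by rewrite !mxE (negbTE hv1) (negbTE hv2) mul0r.
  rewrite !mxE eqxx eq_sym (negbTE (Hloop e)) eqxx addr0 /=.
  rewrite rmorphN1 rmorph1 mulN1r mul1r addrC => /eqP; rewrite subr_eq0 => /eqP.
  by [].
have Hadj : forall a b, adj src tgt a b -> x a 0 = x b 0.
  move=> a b /existsP[e /orP[/andP[/eqP<- /eqP<-]|/andP[/eqP<- /eqP<-]]] //.
move=> u v; have /connectP[p Hp ->] := Hconn u v.
elim: p u Hp => [|a p IH] u //= /andP[Ha Hp].
by rewrite (Hadj _ _ Ha); exact: IH.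
Qed.

Lemma spectral_setup (R : realType) n m (src tgt : 'I_m -> 'I_n) :
  exists (U : 'M[R[i]]_n) (mu : 'I_n -> R),
  U \is unitarymx /\
  cplx_mx (laplacian R src tgt) = U^t* *m diag_mx (\row_l ((mu l)%:C)%C) *m U.
Proof.
set A := cplx_mx (laplacian R src tgt).
have Asym : A^T = A.
  by rewrite /A -cplx_mxT /laplacian trmx_mul trmxK.
have Areal : A \is a realmx.
  by apply/mxOverP => i j; rewrite mxE; apply/complex_realP; eexists.
have Aherm : A \is hermsymmx.
  apply: realsym_hermsym => //.
  by apply/is_hermitianmxP; rewrite expr0 scale1r map_mx_id.
have /orthomx_spectralP HA := hermitian_normalmx Aherm.
have Hr := hermitian_spectral_diag_real Aherm.
exists (spectralmx A), (fun l => complex.Re (spectral_diag A 0 l)).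
split; first exact: spectral_unitarymx.
rewrite {1}HA invmx_unitary ?spectral_unitarymx //; congr (_ *m _); congr (_ *m _).
congr diag_mx; apply/rowP => l; rewrite mxE.
by rewrite RRe_real // (mxOverP Hr).
Qed.
Lemma realC_X (R : rcfType) (x : R) k : ((x%:C)%C)^+k = ((x^+k)%:C)%C :> R[i].
Proof. by rewrite rmorphXn. Qed.

Lemma expmx_formula (R : realType) n (U : 'M[R[i]]_n) (mu : 'I_n -> R) (L : 'M[R]_n) t :
  U \is unitarymx -> cplx_mx L = U^t* *m diag_mx (\row_l ((mu l)%:C)%C) *m U ->
  forall i j, expmx ((-t) *: (L *m L)) i j =
    \sum_l complex.Re ((U l i)^* * U l j) * expR (- t * mu l ^+ 2).
Proof.
move=> HU HL i j.
have H2 : cplx_mx (L *m L) = U^t* *m diag_mx (\row_l ((((mu l)%:C)%C) ^+ 2)) *m U.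
  rewrite cplx_mxM HL.
  transitivity ((U^t* *m diag_mx (\row_l ((mu l)%:C)%C) *m U) ^+ 2); first by rewrite expr2.
  rewrite conj_diag_pow //.
  by congr (_ *m _); congr (_ *m _); congr diag_mx; apply/rowP => l; rewrite !mxE.
have Hb : cplx_mx ((-t) *: (L *m L)) =
    U^t* *m diag_mx (\row_l (((- t * mu l ^+ 2)%:C)%C)) *m U.
  apply/matrixP => a b.
  transitivity (((- t)%:C)%C * cplx_mx (L *m L) a b); first by rewrite !mxE rmorphM.
  rewrite H2 !conj_diag_entry mulr_sumr.
  apply: eq_bigr => l _; rewrite !mxE rmorphM rmorphXn /=.
  by rewrite !mulrA [((- t)%:C)%C * _]mulrC.
have Hpow : forall k, (((-t) *: (L *m L)) ^+ k) i j =
    \sum_l complex.Re ((U l i)^* * U l j) * (- t * mu l ^+ 2) ^+ k.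
  move=> k.
  move/matrixP: (cplx_mxX ((-t) *: (L *m L)) k) => /(_ i j).
  rewrite Hb conj_diag_pow // conj_diag_entry mxE => H.
  rewrite -[LHS]ReC H Re_sum; apply: eq_bigr => l _.
  rewrite !mxE realC_X mulrAC; move: ((U l i)^* * U l j) => c. by case: c => a b /=; rewrite mulr0 subr0.
rewrite mxE.
have -> : (fun N : nat => \sum_(0 <= k < N) (((- t) *: (L *m L)) ^+ k) i j / (k`!)%:R) =
  (fun N => \sum_l complex.Re ((U l i)^* * U l j) * series (exp_coeff (- t * mu l ^+ 2)) N).
  apply: funext => N.
  under eq_bigr do rewrite Hpow mulr_suml.
  rewrite exchange_big /=; apply: eq_bigr => l _.
  rewrite /series /= mulr_sumr; apply: eq_bigr => k _.
  by rewrite /exp_coeff /= -mulrA.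
exact: limn_sum_exp.
Qed.
Lemma perm3 (K : comPzRingType) (c b u : K) : c * b * u = u * b * c.
Proof. by rewrite mulrC [c * b]mulrC mulrA. Qed.

Lemma ReMn (R : rcfType) (z : R[i]) k : complex.Re (z *+ k) = complex.Re z *+ k.
Proof. by elim: k => [|k IH] //; rewrite !mulrS ReD IH. Qed.

Lemma incT1 (R : realType) n m (src tgt : 'I_m -> 'I_n) (Hloop : no_loops src tgt) :
  (incidence R src tgt)^T *m (const_mx 1 : 'cV[R]_n) = 0.
Proof.
apply/matrixP => e k; rewrite !mxE (bigD1 (src e)) //= (bigD1 (tgt e)) /=; last first.
  by rewrite eq_sym Hloop.
rewrite big1 => [|v /andP[hv1 hv2]]; last first.
  by rewrite !mxE (negbTE hv1) (negbTE hv2) mul0r.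
rewrite !mxE eqxx eq_sym (negbTE (Hloop e)) eqxx addr0 /=.
by rewrite !mulr1 addNr.
Qed.

Lemma Q_lemma (R : realType) n m (src tgt : 'I_m -> 'I_n)
  (Hloop : no_loops src tgt) (Hconn : connected_graph src tgt)
  (U : 'M[R[i]]_n) (mu : 'I_n -> R) (hn : (0 < n)%N) :
  U \is unitarymx ->
  cplx_mx (laplacian R src tgt) = U^t* *m diag_mx (\row_l ((mu l)%:C)%C) *m U ->
  (forall i l, mu l != 0 -> \sum_j complex.Re ((U l i)^* * U l j) = 0) /\
  exists a : R, a *+ n = 1 /\
    forall i j, \sum_l complex.Re ((U l i)^* * U l j) * (mu l == 0)%:R = a.
Proof.
move=> HU HL.
set Lc := cplx_mx (laplacian R src tgt).
set one := (const_mx 1 : 'cV[R[i]]_n).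
have H1 : Lc *m one = 0.
  have -> : one = cplx_mx (const_mx 1) by apply/matrixP => a b; rewrite !mxE.
  by rewrite /Lc -cplx_mxM /laplacian -mulmxA incT1 // mulmx0; apply/matrixP => a b; rewrite !mxE.
set V := U *m one.
have HUL : U *m Lc = diag_mx (\row_l ((mu l)%:C)%C) *m U.
  by rewrite /Lc HL !mulmxA (unitarymxP HU) mul1mx.
have HV : forall l, ((mu l)%:C)%C * V l 0 = 0.
  move=> l; have : (U *m Lc *m one) l 0 = 0 by rewrite -mulmxA H1 mulmx0 mxE.
  by rewrite HUL -mulmxA mul_diag_mx !mxE.
have HV0 : forall l, mu l != 0 -> V l 0 = 0.
  move=> l hl; have /eqP := HV l; rewrite mulf_eq0 => /orP[/eqP|/eqP //].
  by move=> [] h; rewrite h eqxx in hl.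
have HVs : forall l, \sum_j U l j = V l 0.
  by move=> l; rewrite mxE; apply: eq_bigr => j _; rewrite mxE mulr1.
split.
  move=> i l hl; rewrite -Re_sum -mulr_sumr HVs HV0 // mulr0 //.
set d0 := \row_l (((mu l == 0)%:R : R[i])).
set Q := U^t* *m diag_mx d0 *m U.
have HQe : forall i j, Q i j = \sum_l (U l i)^* * (mu l == 0)%:R * U l j.
  by move=> i j; rewrite /Q conj_diag_entry; apply: eq_bigr => l _; rewrite mxE.
have HQ1 : Q *m one = one.
  rewrite /Q -!mulmxA -/V.
  have -> : diag_mx d0 *m V = V.
    rewrite mul_diag_mx; apply/matrixP => l k; rewrite [LHS]mxE [d0 _ _]mxE (ord1 k).
    by case: eqP => [_|/eqP h]; rewrite ?mul1r // HV0 // mulr0.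
  by rewrite /V mulmxA unitary_tC // mul1mx.
have HLQ : Lc *m Q = 0.
  rewrite /Lc HL /Q !mulmxA (mulmxtVK _ HU) -(mulmxA (U^t*)) mulmx_diag.
  rewrite [X in diag_mx X](_ : _ = 0); last first.
    apply/rowP => l; rewrite !mxE; case: eqP => [->|_].
      exact: mul0r.
    by rewrite mulr0.
  have -> : diag_mx (0 : 'rV[R[i]]_n) = 0 by apply/matrixP => a b; rewrite !mxE mul0rn.
  by rewrite mulmx0 mul0mx.
have Hcol : forall j u v, Q u j = Q v j.
  move=> j u v.
  have Hk : Lc *m col j Q = 0.
    apply/matrixP => a b; rewrite (ord1 b) [LHS]mxE [RHS]mxE.
    move/matrixP: HLQ => /(_ a j); rewrite [LHS]mxE [RHS]mxE => H.
    rewrite -[in RHS]H.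
    by apply: eq_bigr => k _; rewrite [col j Q k 0]mxE.
  have := @lap_ker R n m src tgt Hloop Hconn (col j Q) Hk u v.
  by rewrite !mxE.
have Hherm : forall i j, Q i j = (Q j i)^*.
  move=> i j; rewrite !HQe rmorph_sum; apply: eq_bigr => l _.
  rewrite !rmorphM /=.
  have h1 : (U l j)^*^* = U l j := conjCK _.
  have h2 : ((mu l == 0)%:R : R[i])^* = (mu l == 0)%:R by rewrite rmorph_nat.
  rewrite h1 h2.
exact: perm3.
set i0 := Ordinal hn.
set c := Q i0 i0.
have HQc : forall i j, Q i j = c.
  move=> i j; rewrite (Hcol j i i0) Hherm (Hcol i0 j i0) /c.
  by rewrite [in RHS]Hherm.
have Hsum : c *+ n = 1.
  move/matrixP: HQ1 => /(_ i0 0); rewrite !mxE => <-.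
  rewrite -[in LHS](card_ord n) -sumr_const; apply: eq_bigr => j _.
  by rewrite HQc mxE mulr1.
exists (complex.Re c); split.
  rewrite -ReMn Hsum. exact: erefl.
move=> i j; rewrite -(HQc i j) HQe Re_sum; apply: eq_bigr => l _.
by rewrite mulrAC !mulr_natr ReMn.
Qed.
Local Close Scope sesquilinear_scope.
Unset Implicit Arguments.

Theorem proposition6p7 (R : realType) (n m : nat) (src tgt : 'I_m -> 'I_n)
  (Hloop : no_loops src tgt) (Hmulti : no_multi_edges src tgt)
  (Hconn : connected_graph src tgt) :
  exists t0 : R, 0 < t0 /\
    forall t : R, t0 <= t ->
      let L := laplacian R src tgt in
      let P := expmx ((- t) *: (L *m L)) in
      (forall f : 'cV[R]_n, (forall i, 0 <= f i 0) -> forall i, 0 <= (P *m f) i 0) /\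
      (forall f : 'cV[R[i]]_n, norm_inf (cplx_mx P *m f) <= norm_inf f).
Proof.
have [Hn0|hn] := posnP n.
  subst n; exists 1; split => // t _ L P; split.
    by move=> f _ [].
  by move=> f; rewrite /norm_inf !big_ord0.
have [U [mu [HU HL]]] := spectral_setup R src tgt.
have [Hrow [a [Ha HQa]]] := Q_lemma Hloop Hconn hn HU HL.
set w := fun i j l => complex.Re ((U l i)^* * U l j).
have a0 : 0 < a.
  rewrite ltNge; apply/negP => h.
  by have := mulrn_wle0 n h; rewrite Ha ler10.
set W : R := 1 + \sum_i \sum_j \sum_l `|w i j l|.
have HW : forall i j, \sum_l `|w i j l| <= W.
  move=> i j.
  have HS : \sum_l `|w i j l| <= \sum_i \sum_j \sum_l `|w i j l|.
    apply: le_trans (le_sum1 (F := fun i => \sum_j \sum_l `|w i j l|) i _); last first.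
      by move=> k; do 2! (apply: sumr_ge0 => ? _).
    apply: (le_sum1 (F := fun j => \sum_l `|w i j l|) j).
    by move=> k; apply: sumr_ge0 => ? _.
  by apply: le_trans HS _; rewrite /W lerDr.
have W0 : 0 < W.
  by rewrite /W ltr_pwDl // sumr_ge0 // => i _; do 2! (apply: sumr_ge0 => ? _).
set t0 : R := 1 + \sum_l W / (a * mu l ^+ 2).
have Hterm : forall l, 0 <= W / (a * mu l ^+ 2).
  move=> l; apply: divr_ge0; first exact: ltW.
  by apply: mulr_ge0; [exact: ltW | exact: sqr_ge0].
have t00 : 0 < t0 by rewrite /t0 ltr_pwDl // sumr_ge0.
exists t0; split => // t Ht L P.
have HP : forall i j, P i j = \sum_l w i j l * expR (- t * mu l ^+ 2).
  by move=> i j; exact: (expmx_formula t HU HL i j).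
have He : forall l, mu l != 0 -> expR (- t * mu l ^+ 2) <= a / W.
  move=> l hl.
  have m2 : 0 < mu l ^+ 2 by rewrite exprn_even_gt0 // hl orbT.
  have Hle : W / (a * mu l ^+ 2) <= t.
    apply: le_trans Ht; rewrite /t0.
    apply: ler_wpDl => //.
    exact: (le_sum1 (F := fun l => W / (a * mu l ^+ 2)) l Hterm).
  have Hy : W / a <= t * mu l ^+ 2.
    have -> : W / a = W / (a * mu l ^+ 2) * mu l ^+ 2.
      by rewrite invfM (mulrA W a^-1 (mu l ^+ 2)^-1) mulfVK ?lt0r_neq0.
    by rewrite ler_wpM2r // ltW.
  have y0 : 0 < t * mu l ^+ 2 by rewrite mulr_gt0 // (lt_le_trans t00 Ht).
  rewrite mulNr; apply: le_trans (expRN_le y0) _.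
  by rewrite -invf_div lef_pV2 ?posrE ?divr_gt0.
have HPa : forall i j,
    P i j = a + \sum_l w i j l * ((mu l != 0)%:R * expR (- t * mu l ^+ 2)).
  move=> i j; rewrite HP -(HQa i j) -big_split /=; apply: eq_bigr => l _.
  case: eqP => [->|_] /=.
    by rewrite mulr1n mulr0n mul0r mulr0 addr0 expr2 mul0r mulr0 expR0 mulr1.
  by rewrite mulr0n mulr1n mulr0 add0r mul1r.
have HPge : forall i j, 0 <= P i j.
  move=> i j; rewrite HPa.
  have : - a <= \sum_l w i j l * ((mu l != 0)%:R * expR (- t * mu l ^+ 2)).
    apply: le_trans (_ : - (\sum_l `|w i j l| * (a / W)) <= _).
      rewrite lerN2 -mulr_suml.
      apply: le_trans (_ : W * (a / W) <= _).
        by apply: ler_wpM2r; [rewrite divr_ge0 // ltW | exact: HW].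
      by rewrite mulrC mulfVK // lt0r_neq0.
    rewrite -sumrN; apply: ler_sum => l _.
    apply: lerNnormlW; rewrite normrM ler_wpM2l //.
    case: (mu l != 0) (He l) => /= [H|_].
      by rewrite mulr1n mul1r ger0_norm ?expR_ge0 //; exact: H.
    by rewrite mulr0n mul0r normr0 divr_ge0 // ltW.
  by move=> h; have := lerD (lexx a) h; rewrite subrr.
have Hrs : forall i, \sum_j P i j = 1.
  move=> i.
  transitivity (\sum_j \sum_l w i j l * (mu l == 0)%:R).
    under eq_bigr do rewrite HP.
    rewrite exchange_big [RHS]exchange_big /=; apply: eq_bigr => l _.
    rewrite -!mulr_suml.
    case: (eqVneq (mu l) 0) => [->|hl].
      by rewrite expr2 mul0r mulr0 expR0 ?eqxx mulr1n.
    by rewrite (Hrow i l hl) !mul0r.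
  under eq_bigr do rewrite HQa.
  by rewrite sumr_const card_ord Ha.
split.
  move=> f hf i; rewrite mxE; apply: sumr_ge0 => j _; exact: mulr_ge0.
move=> f; apply: norm_inf_le; first exact: norm_inf_ge0.
move=> i; rewrite mxE.
apply: le_trans (ler_norm_sum _ _ _) _.
apply: le_trans (_ : \sum_j ((P i j)%:C)%C * norm_inf f <= _).
  apply: ler_sum => j _; rewrite normrM mxE ger0_norm ?ler0c //.
  by apply: ler_wpM2l; [rewrite ler0c | exact: le_norm_inf].
by rewrite -mulr_suml -rmorph_sum Hrs rmorph1 mul1r.
Qed.
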